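(* Let $s\ge1$ and $\varphi\in\mathcal B_s\cap\big(S_1(\zeta_2,\zeta_{22})\circ S_{s-1}(A)\big)$. Then $\varphi\in S_s(\zeta_2,\zeta_{22})$.
   Context: Forms on $\mathbf P^1\times\mathbf P^1$: $\zeta_i=dz_i/z_i$, $\zeta_{ii}=dz_i/(1-z_i)$ ($i=1,2$), $\zeta_{12}=d(z_1z_2)/(1-z_1z_2)$; $A=\{\zeta_1,\zeta_{11},\zeta_2,\zeta_{22},\zeta_{12}\}$. $S_s(A)$ is the vector space with basis the words of length $s$ in $A$, $\circ$ is concatenation. $S_1(\zeta_2,\zeta_{22})\circ S_{s-1}(A)$ is the span of words of length $s$ whose first letter is $\zeta_2$ or $\zeta_{22}$, and $S_s(\zeta_2,\zeta_{22})$ the span of words of length $s$ in the letters $\zeta_2,\zeta_{22}$ only. A homogeneous element $\sum_Ic_I\omega_{i_1}\circ\cdots\circ\omega_{i_s}\in S_s(A)$ satisfies Chen's integrability condition if for each $1\le l<s$, $\sum_Ic_I\omega_{i_1}\otimes\cdots\otimes(\omega_{i_l}\wedge\omega_{i_{l+1}})\otimes\cdots\otimes\omega_{i_s}=0$ as a multiple differential form; $\mathcal B_s$ is the space of elements of $S_s(A)$ satisfying it. *)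

(* Defs.v *)
From HB Require Import structures.
From mathcomp Require Import all_boot all_order all_algebra.
From mathcomp Require Import fraction.
Set Implicit Arguments. Unset Strict Implicit. Unset Printing Implicit Defensive.
Import Order.TTheory GRing.Theory Num.Theory.
Local Open Scope ring_scope.

Inductive letter := L1 | L11 | L2 | L22 | L12.
Definition letters : seq letter := [:: L1; L11; L2; L22; L12].

(* Scalars: a number field F (e.g. rat, real, algC).  Rational functions in
   z1, z2 : the field F(z1,z2) = Frac(F[z2][z1]). *)
Definition RF (F : numFieldType) := {fraction {poly {poly F}}}.
Definition emb (F : numFieldType) (p : {poly {poly F}}) : RF F :=
  @FracField.tofrac {poly {poly F}} p.
Definition z1 (F : numFieldType) : RF F := emb 'X.
Definition z2 (F : numFieldType) : RF F := emb ('X%:P).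
Definition cst (F : numFieldType) (c : F) : RF F := emb ((c%:P)%:P).

(* A rational 1-form  a dz1 + b dz2  is the pair (a, b). *)
Definition form (F : numFieldType) (l : letter) : RF F * RF F :=
  match l with
  | L1  => ((z1 F)^-1, 0)
  | L11 => ((1 - z1 F)^-1, 0)
  | L2  => (0, (z2 F)^-1)
  | L22 => (0, (1 - z2 F)^-1)
  | L12 => (z2 F / (1 - z1 F * z2 F), z1 F / (1 - z1 F * z2 F))
  end.

(* Wedge of two 1-forms: coefficient of dz1 /\ dz2. *)
Definition wedge (F : numFieldType) (w w' : RF F * RF F) : RF F :=
  w.1 * w'.2 - w.2 * w'.1.

(* An element of the free vector space on words is its coefficient function
   phi : seq letter -> F.  It lies in S_s(A) iff it is supported on words of
   length s (finite support is then automatic). *)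
Definition in_S (F : numFieldType) (s : nat) (phi : seq letter -> F) : Prop :=
  forall w, phi w <> 0 -> size w = s.

(* Chen's integrability condition for a homogeneous element of length s:
   for each 1 <= l < s (prefix u of length l-1, suffix v of length s-l-1),
   the multiple form  sum_I c_I w_{i1} (x) .. (x) (w_{il} /\ w_{il+1}) (x) .. 
   vanishes.  Since the 1-forms of A are linearly independent over F, this is
   equivalent to the vanishing, for every prefix u and suffix v, of the
   2-form  sum_{a,b} c_{u a b v} (w_a /\ w_b). *)
Definition chen (F : numFieldType) (s : nat) (phi : seq letter -> F) : Prop :=
  forall u v : seq letter, (size u + size v + 2)%N = s ->
    \sum_(a <- letters) \sum_(b <- letters)
       cst (phi (u ++ a :: b :: v)) * wedge (form F a) (form F b) = 0.

Definition in_B (F : numFieldType) (s : nat) (phi : seq letter -> F) : Prop :=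
  in_S s phi /\ chen s phi.

Definition is_two (a : letter) : bool :=
  match a with L2 | L22 => true | _ => false end.

Definition in_S1_two_first (F : numFieldType) (s : nat) (phi : seq letter -> F) : Prop :=
  in_S s phi /\ (forall a w, ~~ is_two a -> phi (a :: w) = 0).

Definition in_S_two (F : numFieldType) (s : nat) (phi : seq letter -> F) : Prop :=
  in_S s phi /\ (forall w, phi w <> 0 -> all is_two w).

(* Main.v *)
Require Import Defs.
From HB Require Import structures.
From mathcomp Require Import all_boot all_order all_algebra fraction.
From mathcomp Require Import ring.
Set Implicit Arguments. Unset Strict Implicit. Unset Printing Implicit Defensive.
Import Order.TTheory GRing.Theory Num.Theory.
Local Open Scope ring_scope.

Definition Pexpr (R : comNzRingType) (x y k1 k2 k3 k4 k5 k6 : R) : R :=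
  k1 * (1 - x) * (1 - y) * (1 - x * y)
  + k2 * x * (1 - y) * (1 - x * y)
  + k3 * x * y * (1 - x) * (1 - y)
  + k4 * y * (1 - x) * (1 - x * y)
  + k5 * x * y * (1 - x * y)
  + k6 * x * y * y * (1 - x).

Lemma Pexpr_morph (R S : comNzRingType) (f : {rmorphism R -> S}) x y k1 k2 k3 k4 k5 k6 :
  f (Pexpr x y k1 k2 k3 k4 k5 k6) = Pexpr (f x) (f y) (f k1) (f k2) (f k3) (f k4) (f k5) (f k6).
Proof. by rewrite /Pexpr !rmorphD !rmorphM !rmorphB !rmorph1 !rmorphM. Qed.

Lemma field_step (K : fieldType) (x y k1 k2 k3 k4 k5 k6 k7 k8 k9 k10 : K) :
 x != 0 -> y != 0 -> 1 - x != 0 -> 1 - y != 0 -> 1 - x*y != 0 ->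
    k1 * (0 * 0 - y^-1 / x) +
    (k2 * (0 * 0 - y^-1 / (1 - x)) +
     (k3 * (0 / y - y^-1 * 0) +
      (k4 * (0 / (1 - y) - y^-1 * 0) +
       k5 *
       (0 * (x / (1 - x * y)) -
        y^-1 * (y / (1 - x * y)))))) +
    (k6 * (0 * 0 - (1 - y)^-1 / x) +
     (k7 * (0 * 0 - (1 - y)^-1 / (1 - x)) +
      (k8 * (0 / y - (1 - y)^-1 * 0) +
       (k9 * (0 / (1 - y) - (1 - y)^-1 * 0) +
        k10 *
        (0 * (x / (1 - x * y)) -
         (1 - y)^-1 * (y / (1 - x * y))))))) = 0 ->
 Pexpr x y k1 k2 k5 k6 k7 k10 = 0.
Proof.
move=> nx ny n1x n1y n1xy E.
have -> : Pexpr x y k1 k2 k5 k6 k7 k10 =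
   - (x * y * (1 - x) * (1 - y) * (1 - x * y)) *
    (k1 * (0 * 0 - y^-1 / x) +
    (k2 * (0 * 0 - y^-1 / (1 - x)) +
     (k3 * (0 / y - y^-1 * 0) +
      (k4 * (0 / (1 - y) - y^-1 * 0) +
       k5 *
       (0 * (x / (1 - x * y)) -
        y^-1 * (y / (1 - x * y)))))) +
    (k6 * (0 * 0 - (1 - y)^-1 / x) +
     (k7 * (0 * 0 - (1 - y)^-1 / (1 - x)) +
      (k8 * (0 / y - (1 - y)^-1 * 0) +
       (k9 * (0 / (1 - y) - (1 - y)^-1 * 0) +
        k10 *
        (0 * (x / (1 - x * y)) -
         (1 - y)^-1 * (y / (1 - x * y)))))))).
  by rewrite /Pexpr; field; rewrite ?nx ?ny ?n1x ?n1y ?n1xy.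
by rewrite E mulr0.
Qed.
Section A.
Variable F : numFieldType.
Definition ev (a b : F) (p : {poly {poly F}}) : F := (map_poly (horner_eval b) p).[a].

Lemma evB a b p q : ev a b (p - q) = ev a b p - ev a b q.
Proof. by rewrite /ev rmorphB hornerD hornerN. Qed.
Lemma evD a b p q : ev a b (p + q) = ev a b p + ev a b q.
Proof. by rewrite /ev rmorphD hornerD. Qed.
Lemma evM a b p q : ev a b (p * q) = ev a b p * ev a b q.
Proof. by rewrite /ev rmorphM hornerM. Qed.
Lemma ev1 a b : ev a b 1 = 1.
Proof. by rewrite /ev rmorph1 hornerC. Qed.
Lemma evX a b : ev a b 'X = a.
Proof. by rewrite /ev map_polyX hornerX. Qed.
Lemma evY a b : ev a b ('X%:P) = b.
Proof. by rewrite /ev map_polyC hornerC /= horner_evalE hornerX. Qed.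
Lemma evC a b c : ev a b ((c%:P)%:P) = c.
Proof. by rewrite /ev map_polyC hornerC /= horner_evalE hornerC. Qed.
Lemma ev0 a b : ev a b 0 = 0.
Proof. by rewrite /ev rmorph0 horner0. Qed.

Definition evE := (evB, evD, evM, ev1, evX, evY, evC, ev0).

Lemma emb_ne0 p a b : ev a b p != 0 -> emb p != 0.
Proof. rewrite /emb tofrac_eq0; apply: contra => /eqP ->; by rewrite ev0. Qed.

Local Notation X := ('X : {poly {poly F}}).
Local Notation Y := (('X : {poly F})%:P : {poly {poly F}}).
Local Notation C c := (((c : F)%:P)%:P : {poly {poly F}}).

Lemma ev_Pexpr a b x y k1 k2 k3 k4 k5 k6 :
  ev a b (Pexpr x y k1 k2 k3 k4 k5 k6) =
  Pexpr (ev a b x) (ev a b y) (ev a b k1) (ev a b k2) (ev a b k3) (ev a b k4) (ev a b k5) (ev a b k6).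
Proof. by rewrite /ev Pexpr_morph -!horner_evalE Pexpr_morph. Qed.

Lemma key_lemma (c : letter -> letter -> F) :
  (forall a b, ~~ is_two a -> c a b = 0) ->
  \sum_(a <- letters) \sum_(b <- letters)
       cst (c a b) * wedge (Defs.form F a) (Defs.form F b) = 0 ->
  forall a b, ~~ is_two b -> c a b = 0.
Proof.
move=> H E.
rewrite /letters !big_cons !big_nil in E.
rewrite !(H L1) // !(H L11) // !(H L12) // in E.
have cst0 : cst (0 : F) = 0 by rewrite /cst /emb !polyC0 rmorph0.
rewrite cst0 !mul0r !add0r !addr0 in E.
rewrite /wedge /= in E.
have nX : emb X != 0 by apply: (@emb_ne0 _ 1 0); rewrite !evE oner_eq0.
have nY : emb Y != 0 by apply: (@emb_ne0 _ 0 1); rewrite !evE oner_eq0.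
have n1X : 1 - emb X != 0.
  by rewrite -(rmorph1 (@FracField.tofrac _)) -rmorphB; apply: (@emb_ne0 _ 0 0); rewrite !evE subr0 oner_eq0.
have n1Y : 1 - emb Y != 0.
  by rewrite -(rmorph1 (@FracField.tofrac _)) -rmorphB; apply: (@emb_ne0 _ 0 0); rewrite !evE subr0 oner_eq0.
have n1XY : 1 - emb X * emb Y != 0.
  by rewrite -(rmorph1 (@FracField.tofrac _)) -rmorphM -rmorphB; apply: (@emb_ne0 _ 0 0); rewrite !evE mul0r subr0 oner_eq0.
have := field_step nX nY n1X n1Y n1XY E.
rewrite /cst /emb -Pexpr_morph => /eqP; rewrite tofrac_eq0 => /eqP HP.
have V a0 b0 := congr1 (ev a0 b0) HP.
have h00 := V 0 0; have h10 := V 1 0; have h01 := V 0 1.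
have h12 := V 1 2; have h21 := V 2 1; have h22 := V 2 2.
rewrite !ev_Pexpr !evE /Pexpr in h00 h10 h01 h12 h21 h22.
have two0 : (2 : F) != 0 by rewrite pnatr_eq0.
have e1 : c L2 L1 = 0.
  by rewrite -h00; set t := (X in _ = X); unfold t; ring.
have e2 : c L2 L11 = 0.
  by rewrite -h10; set t := (X in _ = X); unfold t; ring.
have e4 : c L22 L1 = 0.
  by rewrite -h01; set t := (X in _ = X); unfold t; ring.
rewrite e1 e2 e4 in h12 h21 h22.
have e5 : c L22 L11 = 0.
  have : c L22 L11 * 2 = 0 by rewrite -[RHS]oppr0 -[in RHS]h12; set t := (X in _ = X); unfold t; ring.
  by move/eqP; rewrite mulf_eq0 (negbTE two0) orbF => /eqP.
rewrite e5 in h21 h22.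
have e6 : c L22 L12 = 0.
  have : c L22 L12 * 2 = 0 by rewrite -[RHS]oppr0 -[in RHS]h21; set t := (X in _ = X); unfold t; ring.
  by move/eqP; rewrite mulf_eq0 (negbTE two0) orbF => /eqP.
rewrite e6 in h22.
have e3 : c L2 L12 = 0.
  have : c L2 L12 * (2 * 2) = 0 by rewrite -[in RHS]h22; set t := (X in _ = X); unfold t; ring.
  by move/eqP; rewrite mulf_eq0 mulf_eq0 (negbTE two0) !orbF => /eqP.
by case=> [] [] //= _; rewrite H.
Qed.
End A.

Lemma take_catS (T : Type) (u s : seq T) k : take (size u + k) (u ++ s) = u ++ take k s.
Proof. by rewrite take_cat ltnNge leq_addr /= addKn. Qed.

Theorem lemma5p8 (F : numFieldType) (s : nat) (phi : seq letter -> F) :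
  (1 <= s)%N -> in_B s phi -> in_S1_two_first s phi -> in_S_two s phi.
Proof.
move=> hs [hS hC] [_ h1]; split => //.
suff K : forall n w, phi w <> 0 -> all is_two (take n w).
  by move=> w hw; have := K (size w) w hw; rewrite take_size.
elim=> [|n IH] w hw; first by rewrite take0.
case: n IH => [|m] IH.
  case: w hw => [|a w] hw //=; rewrite take0 andbT.
  case ha: (is_two a) => //; exfalso; apply: hw; apply: h1; by rewrite ha.
have [lt|ge] := ltnP m.+1 (size w); last first.
  by rewrite take_oversize ?(leqW ge) //; have := IH w hw; rewrite take_oversize.
have Ew : w = take m w ++ nth L1 w m :: nth L1 w m.+1 :: drop m.+2 w.
  by rewrite -(drop_nth L1 lt) -(drop_nth L1 (ltnW lt)) cat_take_drop.
have su : size (take m w) = m by rewrite size_take (ltnW lt).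
rewrite Ew in hw *.
move: (take m w) (nth L1 w m) (nth L1 w m.+1) (drop m.+2 w) su hw => u a b v su hw.
clear Ew lt; subst m.
rewrite -addn2 take_catS all_cat /=.
have := IH _ hw; rewrite -addn1 take_catS all_cat /= andbT => /andP [-> ->] /=.
have hsz : (size u + size v + 2)%N = s.
  by rewrite -(hS _ hw) size_cat /= -addnA addn2.
have Hk := key_lemma (c := fun a' b' => phi (u ++ a' :: b' :: v)).
have Hz : forall a' b', ~~ is_two a' -> phi (u ++ a' :: b' :: v) = 0.
  move=> a' b' na; case: (eqVneq (phi (u ++ a' :: b' :: v)) 0) => // /eqP hne.
  have := IH _ hne; rewrite -addn1 take_catS all_cat /= andbT => /andP [_ ha].
  by rewrite ha in na.
have : is_two b.
  case hb : (is_two b) => //; exfalso; apply: hw.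
  by apply: (Hk Hz (hC u v hsz) a b); rewrite hb.
by move=> hb2; rewrite take0 hb2.
Qed.
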